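(* Let $H=(V,E)$ be a hypergraph such that the digraph $\mathcal D_3(H)$ has a spanning subdigraph that is a vertex-disjoint union of non-trivial arborescences. Then $H$ is quasi-eulerian.
   Context: A hypergraph $H=(V,E)$ consists of a finite nonempty vertex set $V$, a finite edge set $E$ disjoint from $V$, and an incidence function assigning to each edge $e\in E$ a subset of $V$ (also denoted $e$); distinct edges may have the same vertex set. Hypergraphs are assumed to have no empty edges. A walk is a sequence $W=v_0e_1v_1e_2\cdots e_kv_k$ with $v_i\in V$, $e_i\in E$, such that for each $i$, $v_{i-1}\ne v_i$ and $v_{i-1},v_i\in e_i$; the $v_i$ are its anchors. $W$ is closed if $k\ge 2$ and $v_0=v_k$; it is a strict trail if $e_1,\dots,e_k$ are pairwise distinct. An Euler family of $H$ is a family of closed strict trails such that every edge of $H$ lies in exactly one trail and no two trails have a common anchor; $H$ is quasi-eulerian if it has one. $\mathcal D_3(H)$ is the digraph with vertex set $E$ and arc set $\{(e,f): e,f\in E,\ |f\setminus e|=1,\ |e\cap f|\ge 3\}$. An arborescence is a digraph whose underlying undirected graph is a tree and whose arcs are all directed towards a root; it is non-trivial if it has at least two vertices. *)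

(* Defs.v *)
From mathcomp Require Import all_boot.
Set Implicit Arguments. Unset Strict Implicit. Unset Printing Implicit Defensive.

Section Hypergraph.
Variables (V E : finType) (inc : E -> {set V}).

(* A walk v0 e1 v1 ... ek vk is encoded as (v0, [:: (e1,v1); ...; (ek,vk)]). *)
Fixpoint is_walk_from (v : V) (s : seq (E * V)) : bool :=
  match s with
  | [::] => true
  | (e, w) :: s' => [&& v != w, v \in inc e, w \in inc e & is_walk_from w s']
  end.

Definition is_walk (W : V * seq (E * V)) : bool := is_walk_from W.1 W.2.

Definition anchors (W : V * seq (E * V)) : seq V := W.1 :: map snd W.2.

Definition wedges (W : V * seq (E * V)) : seq E := map fst W.2.

Definition closed_strict_trail (W : V * seq (E * V)) : bool :=
  [&& is_walk W, 2 <= size W.2, last W.1 (map snd W.2) == W.1 & uniq (wedges W)].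

Definition euler_family (F : seq (V * seq (E * V))) : Prop :=
  [/\ all closed_strict_trail F,
      forall e : E, count (fun W => e \in wedges W) F = 1 &
      forall i j, i < size F -> j < size F -> i != j ->
        forall W0 : V * seq (E * V),
        [disjoint anchors (nth W0 F i) & anchors (nth W0 F j)]].

Definition quasi_eulerian : Prop := exists F, euler_family F.

Definition D3_arc (e f : E) : bool :=
  (#|inc f :\: inc e| == 1) && (3 <= #|inc e :&: inc f|).

End Hypergraph.

(* Arborescence (all arcs directed towards the root) on vertex set B for the
   arc relation a: there is a root r in B with no out-arc, every other vertex
   of B has exactly one out-arc (inside B), and every vertex of B reaches r
   along arcs inside B. *)
Definition is_arborescence (T : finType) (a : rel T) (B : {set T}) : Prop :=
  exists2 r, r \in B &
    [/\ forall y, ~~ a r y,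
        forall x, x \in B -> x != r -> #|[set y in B | a x y]| = 1 &
        forall x, x \in B -> connect (fun u v => [&& a u v, u \in B & v \in B]) x r].

Definition has_spanning_arborescence_forest (T : finType) (D : rel T) : Prop :=
  exists (A : rel T) (P : {set {set T}}),
  [/\ forall x y, A x y -> D x y,
      partition P [set: T],
      forall B, B \in P -> 2 <= #|B| /\ is_arborescence A B &
      forall x y, A x y -> exists2 B, B \in P & (x \in B) && (y \in B)].

(* Main.v *)
Require Import Defs.
From mathcomp Require Import all_boot zify.
Set Implicit Arguments. Unset Strict Implicit. Unset Printing Implicit Defensive.

Lemma disjP (T : finType) (s t : seq T) :
  reflect (forall x, x \in s -> x \in t -> False) [disjoint s & t].
Proof.
rewrite disjoint_has; apply: (iffP hasPn) => H x xs.
  by move=> xt; move: (H x xs); rewrite /= xt.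
by apply/negP => /= xt; apply: (H x xs).
Qed.

Lemma conn_cross (T : finType) (e : rel T) (S : pred T) x y :
  connect e x y -> ~~ S x -> S y -> exists u v, [/\ e u v, ~~ S u & S v].
Proof.
move/connectP=> [p]; elim: p x => [|z p IH] x /=; first by move=> _ -> /negP.
move=> /andP[exz pz] ly xS yS; case: (boolP (S z)) => Sz; first by exists x, z.
exact: (IH z pz ly Sz yS).
Qed.

Section Walks.
Variables (V E : finType) (inc : E -> {set V}).
Notation walk := (V * seq (E * V))%type.
Notation cst := (closed_strict_trail inc).

Definition flat (F : seq walk) := flatten (map (@wedges V E) F).
Definition fanch (F : seq walk) := flatten (map (@anchors V E) F).

Lemma walk_cat v s t : is_walk_from inc v (s ++ t) =
  is_walk_from inc v s && is_walk_from inc (last v (map snd s)) t.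
Proof.
elim: s v => [|[e w] s IH] v //=; by rewrite IH !andbA.
Qed.

Definition rotw (W : walk) i : walk := (last W.1 (map snd (take i W.2)), rot i W.2).

Lemma cstP (W : walk) : cst W ->
  [/\ is_walk_from inc W.1 W.2, 2 <= size W.2, last W.1 (map snd W.2) = W.1
    & uniq (map fst W.2)].
Proof. by case/and4P=> ? ? /eqP ? ?. Qed.

Lemma cst_rot W i : cst W -> cst (rotw W i).
Proof.
case: W => w0 s /cstP /= [Hw Hs Hl Hu].
have Hd : last (last w0 (map snd (take i s))) (map snd (drop i s)) = w0.
  by rewrite -last_cat -map_cat cat_take_drop.
apply/and4P; split => /=.
- rewrite /is_walk /= /rot walk_cat Hd.
  by move: Hw; rewrite -{1}(cat_take_drop i s) walk_cat andbC.
- by rewrite size_rot.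
- by rewrite /rot map_cat last_cat Hd.
- by rewrite /wedges /= map_rot rot_uniq.
Qed.

Lemma anch_cst W : cst W -> anchors W =i map snd W.2.
Proof.
case: W => w0 s /cstP /= [_ Hs Hl _] x.
case: s Hs Hl => [//|[e w] s] _ /= Hl.
have Hw0 : w0 \in w :: map snd s by rewrite -{1}Hl mem_last.
by rewrite /anchors /= in_cons; case: eqP => [->|].
Qed.

Lemma anchors_rot W i : cst W -> anchors (rotw W i) =i anchors W.
Proof.
move=> H x; rewrite (anch_cst H) (anch_cst (cst_rot i H)) /= map_rot.
by rewrite mem_rot.
Qed.

Lemma rot_start W v : cst W -> v \in anchors W -> exists i, (rotw W i).1 = v.
Proof.
move=> H; rewrite (anch_cst H) => vin; exists (index v (map snd W.2)).+1.
rewrite /rotw /= map_take (take_nth v); first by rewrite last_rcons nth_index.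
by rewrite index_mem.
Qed.

Lemma splice C W : cst C -> cst W -> ~~ [disjoint anchors C & anchors W] ->
  uniq (wedges C ++ wedges W) ->
  exists X, [/\ cst X, perm_eq (wedges X) (wedges C ++ wedges W) &
    {subset anchors X <= anchors C ++ anchors W}].
Proof.
move=> HC HW /disjP Hd Hu.
have [v vC vW] : exists2 v, v \in anchors C & v \in anchors W.
  by apply/exists_inP/negP => /exists_inP H; apply: Hd => x a b; apply: H; exists x.
have [i Hi] := rot_start HC vC; have [j Hj] := rot_start HW vW.
have HC' := cst_rot i HC; have HW' := cst_rot j HW.
have HaC := anchors_rot i HC; have HaW := anchors_rot j HW.
move: HC' HW' HaC HaW; rewrite /rotw; set C' := rot i C.2; set W' := rot j W.2.
move: Hi Hj; rewrite /rotw /= => -> -> /cstP /= [w1 s1 l1 u1] /cstP /= [w2 s2 l2 u2] HaC HaW.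
have Hp : perm_eq (map fst (C' ++ W')) (wedges C ++ wedges W).
  by rewrite map_cat /C' /W' !map_rot; apply: perm_cat; rewrite perm_rot.
exists (v, C' ++ W'); split => //.
- apply/and4P; split => /=.
  + by rewrite /is_walk /= walk_cat w1 l1 w2.
  + by rewrite size_cat (leq_trans s1) // leq_addr.
  + by rewrite map_cat last_cat l1 l2.
  + by rewrite /wedges /= (perm_uniq Hp).
- move=> x Hx.
  have : (x \in anchors (v,C')) || (x \in anchors (v,W')).
    move: Hx; rewrite /anchors /= map_cat !in_cons !mem_cat.
    by case/orP => [->|/orP[->|->]]; rewrite ?orbT.
  rewrite HaC HaW -cat_cons mem_cat => /orP[h|h]; apply/orP; [left|right]; exact: h.
Qed.


Lemma cat_uniq_l' (s1 s2 s3 : seq E) : uniq (s1 ++ s2 ++ s3) -> uniq (s1 ++ s2).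
Proof. by rewrite catA cat_uniq => /andP[]. Qed.

Lemma cat_uniq_r (s1 s2 : seq E) : uniq (s1 ++ s2) -> uniq s2.
Proof. by rewrite cat_uniq => /and3P[]. Qed.
Lemma cat_uniq_l (s1 s2 : seq E) : uniq (s1 ++ s2) -> uniq s1.
Proof. by rewrite cat_uniq => /and3P[]. Qed.

Fixpoint adisj (F : seq walk) : bool :=
  if F is W :: G then [disjoint anchors W & fanch G] && adisj G else true.

Lemma merge C F : cst C -> all cst F -> adisj F -> uniq (wedges C ++ flat F) ->
  exists G, [/\ all cst G, adisj G, perm_eq (flat G) (wedges C ++ flat F) &
    {subset fanch G <= anchors C ++ fanch F}].
Proof.
elim: F C => [|W F IH] C HC.
  move=> _ _ _; exists [:: C]; split => //=; first by rewrite HC.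
  by rewrite andbT; apply/disjP.
move=> /= /andP[HW HF] /andP[HdW HaF].
rewrite /flat /= -/(flat F) => Hu.
case: (boolP [disjoint anchors C & anchors W]) => Hd.
- have Hu' : uniq (wedges C ++ flat F).
    by move: Hu; rewrite uniq_catCA cat_uniq => /and3P[].
  have [G [G1 G2 G3 G4]] := IH C HC HF HaF Hu'.
  exists (W :: G); split => /=.
  + by rewrite HW.
  + rewrite G2 andbT; apply/disjP => x xW /G4; rewrite mem_cat => /orP[xC|xF].
      by move/disjP: Hd => /(_ x xC xW).
    by move/disjP: HdW => /(_ x xW xF).
  + change (perm_eq (wedges W ++ flat G) (wedges C ++ wedges W ++ flat F)).
    by rewrite perm_sym perm_catCA perm_cat2l perm_sym.
  + move=> x; change (x \in anchors W ++ fanch G -> x \in anchors C ++ (anchors W ++ fanch F)).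
    rewrite !mem_cat => /orP[->|/G4].
      by rewrite orbT.
    by rewrite mem_cat => /orP[->|->]; rewrite ?orbT.
- have [X [X1 X2 X3]] := splice HC HW Hd (cat_uniq_l' Hu).
  have Hu' : uniq (wedges X ++ flat F).
    by rewrite (perm_uniq (perm_cat X2 (perm_refl (flat F)))) -catA.
  have [G [G1 G2 G3 G4]] := IH X X1 HF HaF Hu'.
  exists G; split => //.
    by rewrite (permPl G3) catA perm_cat2r.
  move=> x /G4; change (x \in anchors X ++ fanch F -> x \in anchors C ++ (anchors W ++ fanch F)).
  rewrite !mem_cat => /orP[/X3|->]; last by rewrite !orbT.
  by rewrite mem_cat => /orP[->|->]; rewrite ?orbT.
Qed.

Lemma family_merge F : all cst F -> uniq (flat F) ->
  exists G, [/\ all cst G, adisj G & perm_eq (flat G) (flat F)].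
Proof.
elim: F => [|C F IH]; first by exists [::].
move=> /= /andP[HC HF]; change (uniq (wedges C ++ flat F) -> exists G, [/\ all cst G, adisj G & perm_eq (flat G) (wedges C ++ flat F)]).
move=> Hu; have [G0 [G1 G2 G3]] := IH HF (cat_uniq_r Hu).
have Hu' : uniq (wedges C ++ flat G0) by rewrite (perm_uniq (perm_cat (perm_refl _) G3)).
have [G [H1 H2 H3 _]] := merge HC G1 G2 Hu'.
exists G; split => //; by rewrite (permPl H3) perm_cat2l.
Qed.

Lemma sub_fanch W F : W \in F -> {subset anchors W <= fanch F}.
Proof. by move=> WF x xW; apply/flatten_mapP; exists W. Qed.

Lemma adisj_nth F : adisj F -> forall i j, i < size F -> j < size F -> i != j ->
  forall W0, [disjoint anchors (nth W0 F i) & anchors (nth W0 F j)].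
Proof.
elim: F => [|W F IH] //= /andP[Hd Ha] [|i] [|j] //= Hi Hj Hij W0.
- apply/disjP => x xW xF; move/disjP: Hd => /(_ x xW); apply.
  by apply: (sub_fanch (mem_nth W0 Hj)).
- apply/disjP => x xF xW; move/disjP: Hd => /(_ x xW); apply.
  by apply: (sub_fanch (mem_nth W0 Hi)).
- exact: IH.
Qed.

Lemma count_flat F e : uniq (flat F) ->
  count (fun W => e \in wedges W) F = count_mem e (flat F).
Proof.
elim: F => [|W F IH] //=; change (uniq (wedges W ++ flat F) -> (e \in wedges W) + count (fun W => e \in wedges W) F = count_mem e (wedges W ++ flat F)).
move=> Hu; rewrite count_cat IH ?(cat_uniq_r Hu) //.
by rewrite (count_uniq_mem _ (cat_uniq_l Hu)).
Qed.

End Walks.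

Section Hyp.
Variables (V E : finType) (inc : E -> {set V}).
Notation walk := (V * seq (E * V))%type.
Notation cst := (closed_strict_trail inc).

Lemma avoid2 (A : {set V}) a b : 3 <= #|A| -> exists z, [/\ z \in A, z != a & z != b].
Proof.
move=> H3; case: (pickP [pred z | [&& z \in A, z != a & z != b]]) => [z /and3P[]|H0].
  by exists z.
have : A \subset [set a; b].
  apply/subsetP => z zA; move: (H0 z) => /=; rewrite zA /= !inE.
  by case: (z == a); case: (z == b).
move/subset_leq_card; rewrite cards2; case: (a != b); lia.
Qed.

Lemma D3_neq x p : D3_arc inc x p -> x != p.
Proof. by case/andP=> H _; apply/negP => /eqP Ex; move: H; rewrite Ex setDv cards0. Qed.

Lemma seed x p : D3_arc inc x p -> exists W, cst W /\ wedges W = [:: x; p].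
Proof.
move=> H; have xp := D3_neq H; case/andP: H => _ H3.
have [b bI] : exists b, b \in inc x :&: inc p.
  by apply/card_gt0P; apply: leq_trans H3.
have [c [cI cb _]] := avoid2 b b H3.
move: bI cI; rewrite !inE => /andP[bx bp] /andP[cx cp].
exists (b, [:: (x, c); (p, b)]); split => //.
apply/and4P; split => //=.
- by rewrite /is_walk /= bx cx cp bp cb eq_sym cb.
- by rewrite /= inE xp.
Qed.

Lemma insert_ok w0 s1 s2 x p w : cst (w0, s1 ++ (p, w) :: s2) ->
  x \notin map fst (s1 ++ (p, w) :: s2) -> D3_arc inc x p ->
  exists W', cst W' /\ perm_eq (wedges W') (x :: map fst (s1 ++ (p, w) :: s2)).
Proof.
move=> /cstP /= [Hw Hs Hl Hu] Hx /andP[/eqP H1 H3].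
move: Hw; rewrite walk_cat /= => /andP[Hw1 /and4P[uw up wp Hw2]].
set u := last w0 (map snd s1) in uw up wp Hl *.
have [z [zI zu zw]] := avoid2 u w H3.
move: zI; rewrite inE => /andP[zx zp].
have Hl' : forall a b, last w0 (map snd (s1 ++ (a, z) :: (b, w) :: s2)) = w0.
  by move=> a b; move: Hl; rewrite !map_cat !last_cat.
have Hun : uniq (x :: map fst (s1 ++ (p, w) :: s2)) by rewrite /= Hx Hu.
case: (boolP (u \in inc x)) => ux.
- exists (w0, s1 ++ (x, z) :: (p, w) :: s2).
  have Hp : perm_eq (wedges (w0, s1 ++ (x, z) :: (p, w) :: s2))
                    (x :: map fst (s1 ++ (p, w) :: s2)).
    by apply/permP => q; rewrite /wedges /= !map_cat !count_cat /= addnCA.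
  split => //; apply/and4P; split.
  + by rewrite /is_walk /= walk_cat Hw1 /= eq_sym zu ux zx zw zp wp Hw2.
  + by rewrite /= size_cat /= !addnS.
  + by rewrite /= Hl'.
  + by rewrite (perm_uniq Hp).
- have wx : w \in inc x.
    apply: contraT => wx.
    have : [set u; w] \subset inc p :\: inc x.
      by apply/subsetP => q; rewrite !inE => /orP[] /eqP ->; rewrite ?ux ?wx ?up ?wp.
    by move/subset_leq_card; rewrite cards2 uw H1.
  exists (w0, s1 ++ (p, z) :: (x, w) :: s2).
  have Hp : perm_eq (wedges (w0, s1 ++ (p, z) :: (x, w) :: s2))
                    (x :: map fst (s1 ++ (p, w) :: s2)).
    by apply/permP => q; rewrite /wedges /= !map_cat !count_cat /= (addnCA (q p)) addnCA.
  split => //; apply/and4P; split.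
  + by rewrite /is_walk /= walk_cat Hw1 /= eq_sym zu up zp zw zx wx Hw2.
  + by rewrite /= size_cat /= !addnS.
  + by rewrite /= Hl'.
  + by rewrite (perm_uniq Hp).
Qed.

End Hyp.

Section Build.
Variables (V E : finType) (inc : E -> {set V}).
Notation walk := (V * seq (E * V))%type.
Notation cst := (closed_strict_trail inc).
Variables (A : rel E) (P : {set {set E}}).
Hypothesis HAD : forall x y, A x y -> D3_arc inc x y.
Hypothesis Hpart : partition P [set: E].
Hypothesis HB : forall B, B \in P -> 2 <= #|B| /\ is_arborescence A B.

Definition AB (B : {set E}) := fun u v => [&& A u v, u \in B & v \in B].

Definition J4 (F : seq walk) := forall B, B \in P ->
  (forall e, e \in B -> e \notin flat F) \/
  (exists r, [/\ r \in B, r \in flat F & forall x, x \in B -> connect (AB B) x r]).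

Lemma same_block (B B' : {set E}) e : B \in P -> B' \in P -> e \in B -> e \in B' -> B = B'.
Proof.
case/and3P: Hpart => _ Ht _ BP B'P eB eB'.
by rewrite -(def_pblock Ht BP eB) (def_pblock Ht B'P eB').
Qed.

Lemma J4_ext (F F' : seq walk) (B0 : {set E}) : J4 F -> {subset flat F <= flat F'} ->
  (forall e, e \in flat F' -> e \notin flat F -> e \in B0) -> B0 \in P ->
  (exists r, [/\ r \in B0, r \in flat F' & forall x, x \in B0 -> connect (AB B0) x r]) ->
  J4 F'.
Proof.
move=> HJ Hsub Hnew B0P H0 B BP.
case: (eqVneq B B0) => [->|BB0]; first by right.
case: (HJ B BP) => [Hd|[r [rB rF Hc]]].
- left => e eB; apply/negP => eF'.
  have eB0 := Hnew e eF' (Hd e eB).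
  by move/eqP: BB0; apply; apply: (same_block BP B0P eB eB0).
- by right; exists r; split => //; apply: Hsub.
Qed.

Lemma step (F : seq walk) x : all cst F -> uniq (flat F) -> J4 F -> x \notin flat F ->
  exists F', [/\ all cst F', uniq (flat F'), J4 F' & size (flat F) < size (flat F')].
Proof.
move=> Hc Hu HJ xF.
case/and3P: Hpart => /eqP Hcov Ht _.
have xcov : x \in cover P by rewrite Hcov inE.
set B := pblock P x; have BP : B \in P by apply: pblock_mem.
have xB : x \in B by rewrite mem_pblock.
case: (HJ B BP) => [Hdis|[r [rB rF Hcr]]].
- have [H2 [r rB [Hnr _ Hcr]]] := HB BP.
  case: (pickP [pred y | (y \in B) && (y != r)]) => [y /andP[yB yr]|H0]; last first.
    have : B \subset [set r].
      by apply/subsetP => q qB; move: (H0 q) => /=; rewrite qB inE => /negbFE.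
    by move/subset_leq_card; rewrite cards1; lia.
  have [u [v [/and3P[Auv uB vB] ur /eqP vr]]] :=
    conn_cross (S := pred1 r) (Hcr y yB) yr (eqxx r).
  subst v.
  have [W [HW HWe]] := seed (HAD Auv).
  have Hfl : flat (W :: F) = u :: r :: flat F by rewrite /flat /= HWe.
  exists (W :: F); split.
  + by rewrite /= HW Hc.
  + rewrite Hfl /= inE negb_or ur Hdis // Hdis //.
  + apply: (J4_ext HJ _ _ BP).
    * by move=> e eF; rewrite Hfl !inE eF !orbT.
    * by move=> e; rewrite Hfl !inE => /orP[/eqP->|/orP[/eqP->|->]].
    * by exists r; split => //; rewrite Hfl !inE eqxx orbT.
  + by rewrite Hfl.
- have [u [v [/and3P[Auv uB vB] uF vF]]] :=
    conn_cross (S := fun e => e \in flat F) (Hcr x xB) xF rF.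
  case/flatten_mapP: vF => W WF vW.
  case/splitPr: WF Hc Hu HJ uF rF => F1 F2 Hc Hu HJ uF rF.
  case: W vW Hc Hu HJ uF rF => w0 s vW Hc Hu HJ uF rF.
  case/mapP: vW => [[v' w]] pws /= Ev; subst v'.
  have [s1 [s2 Es]] : exists s1 s2, s = s1 ++ (v, w) :: s2.
    by move: pws => /= /splitPr [s1 s2]; exists s1, s2.
  subst s.
  have Hflat : flat (F1 ++ (w0, s1 ++ (v, w) :: s2) :: F2) =
     flat F1 ++ map fst (s1 ++ (v, w) :: s2) ++ flat F2.
    by rewrite /flat (map_cat (@wedges V E)) flatten_cat.
  have HcW : cst (w0, s1 ++ (v, w) :: s2).
    by move: Hc; rewrite all_cat /= => /and3P[].
  have ux : u \notin map fst (s1 ++ (v, w) :: s2).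
    by apply: contra uF; rewrite Hflat !mem_cat => ->; rewrite orbT.
  have [W' [HW' Hp]] := insert_ok HcW ux (HAD Auv).
  set F' := F1 ++ W' :: F2.
  have HpF : perm_eq (flat F') (u :: flat (F1 ++ (w0, s1 ++ (v, w) :: s2) :: F2)).
    have HfF' : flat F' = flat F1 ++ wedges W' ++ flat F2.
      by rewrite /F' /flat (map_cat (@wedges V E)) flatten_cat.
    rewrite HfF' Hflat.
    apply: (perm_trans (perm_cat (perm_refl (flat F1)) (perm_cat Hp (perm_refl (flat F2))))).
    by rewrite perm_catCA /= perm_cons perm_catCA.
  exists F'; split.
  + by move: Hc; rewrite /F' !all_cat /= HW' => /and3P[-> _ ->].
  + by rewrite (perm_uniq HpF) /= uF Hu.
  + apply: (J4_ext HJ _ _ BP).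
    * by move=> e eF; rewrite (perm_mem HpF) inE eF orbT.
    * by move=> e; rewrite (perm_mem HpF) inE => /orP[/eqP->|->].
    * by exists r; split => //; rewrite (perm_mem HpF) inE rF orbT.
  + by rewrite (perm_size HpF).
Qed.

End Build.

Lemma build (V E : finType) (inc : E -> {set V}) (A : rel E) (P : {set {set E}})
  (HAD : forall x y, A x y -> D3_arc inc x y) (Hpart : partition P [set: E])
  (HB : forall B, B \in P -> 2 <= #|B| /\ is_arborescence A B) n :
  forall F : seq (V * seq (E * V)), #|E| - size (flat F) <= n ->
  all (closed_strict_trail inc) F -> uniq (flat F) -> J4 A P F ->
  exists G, [/\ all (closed_strict_trail inc) G, uniq (flat G) & forall e, e \in flat G].
Proof.
elim: n => [|n IH] F Hn Hc Hu HJ;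
  (case: (boolP [forall e, e \in flat F]) => [/forallP Hall|/forallPn [x xF]];
   first by exists F).
- have : size (x :: flat F) <= #|E|.
    have /card_uniqP <- : uniq (x :: flat F) by rewrite /= xF Hu.
    exact: max_card.

  rewrite /= => Hs; exfalso; move: Hn; rewrite leqn0 subn_eq0 => /(leq_trans Hs); by rewrite ltnn.
- have [F' [H1 H2 H3 H4]] := step HAD Hpart HB Hc Hu HJ xF.
  apply: (IH F') => //; lia.
Qed.

Theorem theorem2p9 (V E : finType) (inc : E -> {set V})
  (HV : 0 < #|V|) (Hne : forall e : E, inc e != set0) :
  has_spanning_arborescence_forest (D3_arc inc) ->
  quasi_eulerian inc.
Proof.
move=> [A [P [HAD Hpart HB _]]].
have HJ0 : J4 A P ([::] : seq (V * seq (E * V))) by move=> B _; left.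
have [G [G1 G2 G3]] := build HAD Hpart HB (n := #|E|) (F := [::]) (leq_subr _ _) isT isT HJ0.
have [H [H1 H2 H3]] := family_merge G1 G2.
exists H; split => //.
- move=> e; rewrite count_flat ?(perm_uniq H3) // count_uniq_mem ?(perm_uniq H3) //.
  by rewrite (perm_mem H3) G3.
- exact: adisj_nth.
Qed.
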